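(* Let $(X,d)$ be a metric space, $\mu$ a non-atomic Borel measure on $X$, $m$ a Borel measure on $X$, $0<p<\infty$, and let $\Gamma^*\subset\Gamma^\mu$ be a family of paths closed under taking non-trivial subpaths such that any two points of $X$ are joined by a path in $\Gamma^*$. Let $F\subset X$ satisfy $$\inf\{\|f\|_{N^{1,p}}: f\in\tilde N^{1,p}(X),\ f|_F\ge1\}=0.$$ Then $\mathrm{Mod}_p(\Gamma_F)=0$, where $\Gamma_F=\{\gamma\in\Gamma^*:\mathrm{Im}(\gamma)\cap F\neq\emptyset\}$.
   Context: A path is a continuous map $\gamma:[a,b]\to X$; a subpath is a restriction to a subinterval, trivial if that interval is a point; $\mathrm{Im}(\gamma)=\gamma([a,b])$. $\mu$ non-atomic: $\mu(\{x\})=0$ for all $x$. $\Gamma^\mu$ is the set of all non-trivial injective paths $\gamma$ with $0<\mu(\mathrm{Im}(\tilde\gamma))<\infty$ for every non-trivial subpath $\tilde\gamma$. For Borel $g\ge0$, $\int_\gamma g:=\int_{\mathrm{Im}(\gamma)}g\,d\mu$. For $\Gamma\subset\Gamma^*$, $\mathrm{Mod}_p(\Gamma)=\inf\int_Xg^p\,dm$ over Borel $g\ge0$ with $\int_\gamma g\ge1$ for all $\gamma\in\Gamma$. A Borel $\rho\ge0$ is a $p$-weak upper gradient of $f$ if $|f(x)-f(y)|\le\int_\gamma\rho$ for all $\gamma\in\Gamma^*$ outside a family of $p$-modulus zero, $x,y$ the endpoints of $\gamma$. $\tilde N^{1,p}(X)$ is the set of $f\in L^p(m)$ having a $p$-weak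 upper gradient in $L^p(m)$, with $\|f\|_{N^{1,p}}=\|f\|_{L^p(m)}+\inf_\rho\|\rho\|_{L^p(m)}$ over all $p$-weak upper gradients $\rho$ of $f$. *)

(* Defs.v *)
From HB Require Import structures.
From mathcomp Require Import all_boot all_order all_algebra.
From mathcomp Require Import all_classical all_reals all_analysis.
From mathcomp Require Import measurable_realfun.
Set Implicit Arguments. Unset Strict Implicit. Unset Printing Implicit Defensive.
Import Order.TTheory GRing.Theory Num.Theory.
Local Open Scope classical_set_scope.
Local Open Scope ring_scope.

Definition is_metric {R : realType} {T : Type} (dist : T -> T -> R) : Prop :=
  (forall x y, dist x y = 0 <-> x = y) /\
  (forall x y, dist x y = dist y x) /\
  (forall x y z, dist x z <= dist x y + dist y z).

Definition dopen {R : realType} {T : Type} (dist : T -> T -> R) (U : set T) : Prop :=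
  forall x, U x -> exists2 e : R, 0 < e & [set y | dist x y < e] `<=` U.

Definition borel_for {R : realType} {d} (T : measurableType d) (dist : T -> T -> R) : Prop :=
  (@measurable d T) = <<s dopen dist >>.

(* A (parametrized) path: gamma restricted to [a,b] *)
Record mpath (R : realType) (T : Type) := Path { pa : R; pb : R; pf : R -> T }.

Section paths.
Context {R : realType} {T : Type}.

Definition is_path (dist : T -> T -> R) (g : mpath R T) : Prop :=
  pa g <= pb g /\
  forall t, `[pa g, pb g]%classic t -> forall e : R, 0 < e ->
    exists2 del : R, 0 < del & forall s, `[pa g, pb g]%classic s ->
      `|s - t| < del -> dist (pf g t) (pf g s) < e.

Definition Im (g : mpath R T) : set T := pf g @` `[pa g, pb g]%classic.

Definition nontrivial (g : mpath R T) : Prop := pa g < pb g.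

Definition subpath (h g : mpath R T) : Prop :=
  pa g <= pa h /\ pa h <= pb h /\ pb h <= pb g /\ pf h = pf g.

Definition injective_path (g : mpath R T) : Prop :=
  {in `[pa g, pb g]%classic &, injective (pf g)}.

End paths.

Section newtonian.
Context {R : realType} {d : measure_display} {T : measurableType d}.
Local Open Scope ereal_scope.

Definition Gamma_mu (dist : T -> T -> R) (mu : {measure set T -> \bar R}) :
  set (mpath R T) :=
  [set g | is_path dist g /\ nontrivial g /\ injective_path g /\
     forall h, subpath h g -> nontrivial h ->
       0 < mu (Im h) /\ mu (Im h) < +oo].

Definition lineint (mu : {measure set T -> \bar R}) (gam : mpath R T)
  (g : T -> \bar R) : \bar R := \int[mu]_(x in Im gam) g x.

Definition admissible (mu : {measure set T -> \bar R}) (Gam : set (mpath R T))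
  (g : T -> \bar R) : Prop :=
  measurable_fun [set: T] g /\ (forall x, 0 <= g x) /\
  forall gam, Gam gam -> 1 <= lineint mu gam g.

Definition Mod_p (mu m : {measure set T -> \bar R}) (p : R)
  (Gam : set (mpath R T)) : \bar R :=
  ereal_inf [set \int[m]_x (poweR (g x) p) | g in admissible mu Gam].

Definition weak_upper_gradient (mu m : {measure set T -> \bar R}) (p : R)
  (Gstar : set (mpath R T)) (f : T -> R) (rho : T -> \bar R) : Prop :=
  measurable_fun [set: T] rho /\ (forall x, 0 <= rho x) /\
  exists2 Gam0, Gam0 `<=` Gstar /\ Mod_p mu m p Gam0 = 0 &
    forall gam, Gstar gam -> ~ Gam0 gam ->
      (`|f (pf gam (pa gam)) - f (pf gam (pb gam))|)%:E <= lineint mu gam rho.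

Definition inLp (m : {measure set T -> \bar R}) (p : R) (f : T -> \bar R) : Prop :=
  measurable_fun [set: T] f /\ \int[m]_x (poweR `|f x| p) < +oo.

Definition Ntilde (mu m : {measure set T -> \bar R}) (p : R)
  (Gstar : set (mpath R T)) : set (T -> R) :=
  [set f | inLp m p (EFin \o f) /\
     exists2 rho, weak_upper_gradient mu m p Gstar f rho & inLp m p rho].

Definition N1p_norm (mu m : {measure set T -> \bar R}) (p : R)
  (Gstar : set (mpath R T)) (f : T -> R) : \bar R :=
  Lnorm m p%:E (EFin \o f) +
  ereal_inf [set Lnorm m p%:E rho | rho in weak_upper_gradient mu m p Gstar f].

Definition Gamma_F (Gstar : set (mpath R T)) (F : set T) : set (mpath R T) :=
  [set gam | Gstar gam /\ Im gam `&` F !=set0].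

End newtonian.

(* Main.v *)
Require Import Defs.
From HB Require Import structures.
From mathcomp Require Import all_boot all_order all_algebra.
From mathcomp Require Import all_classical all_reals all_analysis.
From mathcomp Require Import lra measurable_realfun.
Import Order.TTheory GRing.Theory Num.Theory numFieldNormedType.Exports.
Local Open Scope classical_set_scope.
Local Open Scope ring_scope.

Lemma dist_ge0 (R : realType) (T : Type) (dist : T -> T -> R) :
  is_metric dist -> forall x y, 0 <= dist x y.
Proof.
move=> [d0 [dsym dtri]] x y.
have := dtri x y x; rewrite (proj2 (d0 x x) erefl) (dsym y x).
by move=> h; rewrite -(@pmulr_rge0 _ 2) // mulr2n mulrDl mul1r.
Qed.

Lemma Im_meas (R : realType) d (T : measurableType d) (dist : T -> T -> R) (g : mpath R T) :
  is_metric dist -> borel_for dist -> is_path dist g -> measurable (Defs.Im g).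
Proof.
move=> hm hb [hab hc].
have dge0 := @dist_ge0 _ _ _ hm.
move: hm => [d0 [dsym dtri]].
suff : measurable (~` Defs.Im g) by move/measurableC; rewrite setCK.
rewrite /borel_for in hb; rewrite hb; apply: sub_gen_smallest.
move=> z zn.
pose psi t := dist z (pf g t).
have [c cab cmin] : exists2 c, c \in `[pa g, pb g] & forall t, t \in `[pa g, pb g] -> psi c <= psi t.
  apply: (@EVT_min R psi (pa g) (pb g) hab).
  apply/subspace_continuousP => t tab; apply/cvgrPdist_lt => e e0.
  have [del del0 H] := hc t tab e e0.
  rewrite near_withinE; near=> s => sab.
  have hs : `|s - t| < del.
    by rewrite distrC; near: s; apply/nbhs_ballP; exists del => // u; rewrite /ball /=.
  have := H s sab hs; apply: le_lt_trans.
  rewrite /psi /from_subspace /= ler_norml.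
  have h1 := dtri z (pf g s) (pf g t); have h2 := dtri z (pf g t) (pf g s).
  rewrite (dsym (pf g s) (pf g t)) in h1.
  apply/andP; split; lra.
exists (psi c).
  rewrite lt_neqAle dge0 andbT; apply/eqP => /esym /d0 zc.
  by apply: zn; exists c => //; rewrite zc.
move=> y /= hy [t tab ty]; move: hy; rewrite -ty.
by move/(_ t tab): cmin; rewrite /psi => /le_lt_trans h /h; rewrite ltxx.
Unshelve. all: by end_near.
Qed.

Section helpers.
Context {R : realType} {d : measure_display} {T : measurableType d}.
Local Open Scope ereal_scope.

Lemma my_Lnorm_abse (m : {measure set T -> \bar R}) (p : R) (g : T -> \bar R) :
  Lnorm m p%:E (abse \o g) = Lnorm m p%:E g.
Proof.
rewrite unlock /=; congr poweR; apply: eq_integral => x _ /=; by rewrite abse_id.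
Qed.

Lemma pow_bound (m : {measure set T -> \bar R}) (p c del : R) (w : T -> \bar R) :
  (0 < p)%R -> (0 <= c)%R -> (forall x, 0 <= w x) -> measurable_fun setT w ->
  Lnorm m p%:E w < del%:E ->
  \int[m]_x poweR (c%:E * w x) p <= ((c * del) `^ p)%:E.
Proof.
move=> p0 c0 w0 mw hL.
have d0 : (0 <= del)%R by rewrite -lee_fin; apply: le_trans (ltW hL); exact: Lnorm_ge0.
under eq_integral => x _ do rewrite poweRM // poweR_EFin.
have h0 : forall x, [set: T] x -> 0 <= poweR (w x) p by move=> x _; apply: poweR_ge0.
have hm : measurable_fun setT (fun x => poweR (w x) p).
  exact: measurableT_comp (measurable_poweR _) mw.
rewrite (ge0_integralZl_EFin _ measurableT h0 hm) ?powR_ge0 //.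
have -> : \int[m]_x poweR (w x) p = Lnorm m p%:E w `^ p.
  rewrite poweR_Lnorm ?gt_eqF //; apply: eq_integral => x _; rewrite gee0_abs //.
rewrite powRM // EFinM; apply: lee_wpmul2l; first by rewrite lee_fin powR_ge0.
rewrite -poweR_EFin; apply: gt0_ler_poweR; first exact: ltW.
- by rewrite in_itv /= Lnorm_ge0 leey.
- by rewrite in_itv /= lee_fin d0 leey.
- exact: ltW.
Qed.

Lemma term_le_series (u : nat -> \bar R) i : (forall n, 0 <= u n) ->
  u i <= \sum_(j <oo) u j.
Proof.
move=> u0; apply: le_trans (@nneseries_lim_ge _ u xpredT 0 i.+1 _) => //.
rewrite big_nat_recr //=; apply: leeDr; exact: sume_ge0.
Qed.

Lemma le_root (p : R) (a S : \bar R) : (0 < p)%R -> 0 <= a -> 0 <= S ->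
  poweR a p <= S -> a <= poweR S p^-1.
Proof.
move=> p0 a0 S0 h.
have -> : a = poweR (poweR a p) p^-1 by rewrite -poweRrM mulfV ?gt_eqF // poweRe1.
apply: gt0_ler_poweR => //.
- by rewrite invr_ge0 ltW.
- by rewrite in_itv /= poweR_ge0 leey.
- by rewrite in_itv /= S0 leey.
Qed.

Lemma root_pow (p : R) (S : \bar R) : (0 < p)%R -> 0 <= S -> poweR (poweR S p^-1) p = S.
Proof. by move=> p0 S0; rewrite -poweRrM mulVf ?gt_eqF // poweRe1. Qed.



Lemma lint_le (mu : {measure set T -> \bar R}) (A : set T) (v w : T -> \bar R) :
  measurable A -> measurable_fun setT v -> measurable_fun setT w ->
  (forall x, 0 <= v x) -> (forall x, v x <= w x) ->
  \int[mu]_(x in A) v x <= \int[mu]_(x in A) w x.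
Proof.
move=> mA mv mw v0 vw.
exact: (ge0_le_integral mu mA (fun x _ => v0 x) (measurable_funS measurableT (@subsetT _ A) mv)
  (measurable_funS measurableT (@subsetT _ A) mw) (fun x _ => vw x)).
Qed.

Lemma lint_sub (mu : {measure set T -> \bar R}) (A B : set T) (w : T -> \bar R) :
  measurable A -> measurable B -> A `<=` B -> measurable_fun setT w ->
  (forall x, 0 <= w x) ->
  \int[mu]_(x in A) w x <= \int[mu]_(x in B) w x.
Proof.
move=> mA mB AB mw w0.
exact: (ge0_subset_integral mu mA mB (measurable_funS measurableT (@subsetT _ B) mw) (fun x _ => w0 x) AB).
Qed.

Lemma int3 (m : {measure set T -> \bar R}) (A B C : T -> \bar R) :
  measurable_fun setT A -> measurable_fun setT B -> measurable_fun setT C ->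
  (forall x, 0 <= A x) -> (forall x, 0 <= B x) -> (forall x, 0 <= C x) ->
  \int[m]_x (A x + B x + C x) = \int[m]_x A x + \int[m]_x B x + \int[m]_x C x.
Proof.
move=> mA mB mC A0 B0 C0.
rewrite (ge0_integralD m measurableT (f1 := fun x => A x + B x) (f2 := C)) //.
- by rewrite (ge0_integralD m measurableT (f1 := A) (f2 := B)).
- by move=> x _; rewrite adde_ge0.
- exact: emeasurable_funD.
Qed.

End helpers.

Lemma inI {R : realType} (a b r : R) : `[a, b]%classic r = ((a <= r) && (r <= b)).
Proof. by rewrite /= in_itv. Qed.

Section main.
Context {R : realType} {d : measure_display} {T : measurableType d}.
Variables (dist : T -> T -> R) (mu m : {measure set T -> \bar R}) (p : R)
  (Gstar : set (mpath R T)) (F : set T).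
Hypotheses (hm : is_metric dist) (hb : borel_for dist) (p0 : 0 < p)
  (hGs : Gstar `<=` Gamma_mu dist mu)
  (hsub : forall g h, Gstar g -> subpath h g -> nontrivial h -> Gstar h).
Hypothesis hinf : ereal_inf [set N1p_norm mu m p Gstar f |
               f in [set f | Ntilde mu m p Gstar f /\ forall x, F x -> 1 <= f x]]
    = 0%E.

Local Open Scope ereal_scope.

Definition ee (eps : R) (i : nat) : R := (eps / (2 ^ i.+1)%:R)%R.
Definition cc (i : nat) : R := (i.+2)%:R.

Definition good eps i (f : T -> R) (rho : T -> \bar R) (G0 : set (mpath R T))
  (k : T -> \bar R) : Prop :=
  measurable_fun setT (EFin \o f) /\ (forall x, F x -> (1 <= f x)%R) /\
  \int[m]_x poweR ((cc i)%:E * `|(f x)%:E|) p <= (ee eps i)%:E /\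
  measurable_fun setT rho /\ (forall x, 0 <= rho x) /\
  \int[m]_x poweR ((cc i)%:E * rho x) p <= (ee eps i)%:E /\
  (forall gam, Gstar gam -> ~ G0 gam ->
     (`|f (pf gam (pa gam)) - f (pf gam (pb gam))|)%:E <= lineint mu gam rho) /\
  admissible mu G0 k /\ \int[m]_x poweR (k x) p <= (ee eps i)%:E.

Lemma step eps : (0 < eps)%R -> forall i, exists q : (T -> R) * (T -> \bar R) *
  set (mpath R T) * (T -> \bar R), good eps i q.1.1.1 q.1.1.2 q.1.2 q.2.
Proof.
move=> e0 i.
have ei0 : (0 < ee eps i)%R by rewrite /ee divr_gt0 // ltr0n expn_gt0.
have ci0 : (0 < cc i)%R by rewrite /cc ltr0n.
pose del := (ee eps i `^ p^-1 / cc i)%R.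
have del0 : (0 < del)%R by rewrite /del divr_gt0 // powR_gt0.
have cdel : ((cc i * del) `^ p = ee eps i)%R.
  by rewrite /del mulrC divfK ?gt_eqF // -powRrM mulVf ?gt_eqF // powRr1 // ltW.
have : ereal_inf [set N1p_norm mu m p Gstar f | f in [set f | Ntilde mu m p Gstar f /\
   forall x, F x -> (1 <= f x)%R]] < del%:E by rewrite hinf lte_fin.
move/ereal_inf_lt => [_ [f [[[mf _] _] fF] <-]] hN.
rewrite /N1p_norm in hN.
set W := ereal_inf _ in hN.
have W0 : 0 <= W by apply: le_ereal_inf_tmp => _ [rho _ <-]; exact: Lnorm_ge0.
have L0 : 0 <= Lnorm m p%:E (EFin \o f) by exact: Lnorm_ge0.
have hLf : Lnorm m p%:E (EFin \o f) < del%:E by apply: le_lt_trans hN; exact: leeDl.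
have hW : W < del%:E by apply: le_lt_trans hN; exact: leeDr.
have [_ [rho [mrho [rho0 [G0 [G0s G0mod] hG0]]] <-] hrho] := ereal_inf_lt hW.
have : Mod_p mu m p G0 < (ee eps i)%:E by rewrite G0mod lte_fin.
move/ereal_inf_lt => [_ [k kadm <-] hk].
exists (f, rho, G0, k); rewrite /good /=.
split => //; split => //; split.
  rewrite -cdel; apply: (@pow_bound _ _ _ m p (cc i) del (fun x => `|(f x)%:E|)) => //.
  - by apply: measurableT_comp mf; exact: abse_measurable.
  - by rewrite (my_Lnorm_abse _ _ (EFin \o f)).
split => //; split => //; split.
  by rewrite -cdel; apply: pow_bound => //; exact: ltW.
split => //; split => //; exact: ltW.
Qed.



Lemma key eps : (0 < eps)%R -> Mod_p mu m p (Gamma_F Gstar F) <= (3 * eps)%:E.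
Proof.
move=> e0.
have [q hq] := choice (@step eps e0).
pose f i := (q i).1.1.1; pose rho i := (q i).1.1.2; pose G0 i := (q i).1.2;
pose k i := (q i).2.
have hg : forall i, good eps i (f i) (rho i) (G0 i) (k i) by move=> i; exact: hq.
have ci0 : forall i, (0 < cc i)%R by move=> i; rewrite /cc ltr0n.
have mf i : measurable_fun setT (EFin \o f i) by case: (hg i).
have mrho i : measurable_fun setT (rho i) by case: (hg i) => _ [_ [_ []]].
have rho0 i : forall x, 0 <= rho i x by case: (hg i) => _ [_ [_ [_ []]]].
have kadm i : admissible mu (G0 i) (k i) by case: (hg i) => _ [_ [_ [_ [_ [_ [_ []]]]]]].
have mk i : measurable_fun setT (k i) by case: (kadm i).
have k0 i : forall x, 0 <= k i x by case: (kadm i) => _ [].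
pose a i x := (cc i)%:E * rho i x.
pose b i x := k i x.
pose c i x := (cc i)%:E * `|(f i x)%:E|.
have a0 i x : 0 <= a i x by rewrite mule_ge0 // lee_fin ltW.
have c0 i x : 0 <= c i x by rewrite mule_ge0 // lee_fin ltW.
have ma i : measurable_fun setT (a i) by exact: measurable_funeM.
have mc i : measurable_fun setT (c i).
  by apply: measurable_funeM; apply: measurableT_comp (mf i); exact: abse_measurable.
pose u i x := poweR (a i x) p + poweR (b i x) p + poweR (c i x) p.
have u0 i x : 0 <= u i x by rewrite !adde_ge0 ?poweR_ge0.
have mu_ i : measurable_fun setT (u i).
  apply: emeasurable_funD; first apply: emeasurable_funD.
  - exact: measurableT_comp (measurable_poweR _) (ma i).
  - exact: measurableT_comp (measurable_poweR _) (mk i).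
  - exact: measurableT_comp (measurable_poweR _) (mc i).
pose S x := \sum_(i <oo) u i x.
have S0 x : 0 <= S x by apply: nneseries_ge0 => n _ _; exact: u0.
have mS : measurable_fun setT S.
  exact: (@ge0_emeasurable_sum _ _ _ setT u predT (fun k x _ _ => u0 k x) (fun k _ => mu_ k)).
pose G x := poweR (S x) p^-1.
have mG : measurable_fun setT G by exact: measurableT_comp (measurable_poweR _) mS.
have G0' x : 0 <= G x by exact: poweR_ge0.
have leS i x : u i x <= S x by exact: term_le_series.
have leaG i x : a i x <= G x.
  apply: le_root => //; apply: le_trans (leS i x).
  by rewrite /u -addeA leeDl // adde_ge0 ?poweR_ge0.
have lebG i x : b i x <= G x.
  apply: le_root => //; apply: le_trans (leS i x).
  by rewrite /u -addeA addeCA leeDl // adde_ge0 ?poweR_ge0.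
have lecG i x : c i x <= G x.
  apply: le_root => //; apply: le_trans (leS i x).
  by rewrite /u leeDr // adde_ge0 ?poweR_ge0.
have Gadm : admissible mu (Gamma_F Gstar F) G.
  split => //; split => // gam [Gg [x0 [Ix0 Fx0]]].
  have [pg [ntg [_ hsg]]] := hGs _ Gg.
  have mI := @Im_meas _ _ _ _ _ hm hb pg.
  rewrite /lineint.
  have lG (w : T -> \bar R) : measurable_fun setT w -> (forall x, 0 <= w x) ->
      (forall x, w x <= G x) ->
      \int[mu]_(x in Defs.Im gam) w x <= \int[mu]_(x in Defs.Im gam) G x.
    by move=> mw w0 wG; exact: lint_le mu _ _ _ mI mw mG w0 wG.
  case: (pselect (exists i y, Defs.Im gam y /\ (f i y <= 2^-1)%R)) =>
    [[i [y [[t tab yt] fy]]] | nA].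
  - case: Ix0 => s sab sx.
    have [_ [fF _]] := hg i.
    have fx := fF x0 Fx0.
    have [h [Gh hI] hend] : exists2 h, Gstar h /\ Defs.Im h `<=` Defs.Im gam &
      ((pf h (pa h) = x0 /\ pf h (pb h) = y) \/ (pf h (pa h) = y /\ pf h (pb h) = x0)).
      have mk2 (u1 v : R) : `[pa gam, pb gam]%classic u1 ->
          `[pa gam, pb gam]%classic v -> (u1 < v)%R ->
          Gstar (Path u1 v (pf gam)) /\ Defs.Im (Path u1 v (pf gam)) `<=` Defs.Im gam.
        move=> uin vin uv; rewrite !inI in uin vin.
        case/andP: uin => au ub; case/andP: vin => av vb.
        split.
          apply: (hsub _ _ Gg) => //; rewrite /subpath /=; split => //; split.
            exact: ltW.
          by split.
        move=> z [r rin <-]; exists r => //; rewrite inI /= in rin *.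
        case/andP: rin => h1 h2.
        by rewrite in_itv /= (le_trans au h1) (le_trans h2 vb).
      case: (ltgtP s t) => [st|ts|est].
      + by exists (Path s t (pf gam)); [exact: mk2 | left].
      + by exists (Path t s (pf gam)); [exact: mk2 | right].
      + by exfalso; move: fy; rewrite -yt -est sx => fy'; lra.
    have hdiff : (2^-1 <= `|f i (pf h (pa h)) - f i (pf h (pb h))|)%R.
      case: hend => [[-> ->]|[-> ->]]; last rewrite distrC.
        by have := ler_norm (f i x0 - f i y); lra.
      by have := ler_norm (f i x0 - f i y); lra.
    have [pgh _] := hGs _ Gh.
    have mIh := @Im_meas _ _ _ _ _ hm hb pgh.
    have [_ [_ [_ [_ [_ [_ [hw _]]]]]]] := hg i.
    case: (pselect (G0 i h)) => hG0.
    + have [_ [_ hk]] := kadm i.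
      apply: le_trans (hk h hG0) _; rewrite /lineint.
      apply: le_trans (lint_sub mu _ _ _ mIh mI hI (mk i) (k0 i)) _.
      exact: lG (mk i) (k0 i) (lebG i).
    + have h1 := hw h Gh hG0.
      have h2 : (2^-1)%:E <= \int[mu]_(x in Defs.Im gam) rho i x.
        apply: le_trans _ (lint_sub mu _ _ _ mIh mI hI (mrho i) (rho0 i)).
        by apply: le_trans h1; rewrite lee_fin.
      apply: le_trans _ (lG _ (ma i) (a0 i) (leaG i)).
      rewrite /a (@ge0_integralZl_EFin _ _ _ mu _ mI (rho i) (fun x _ => rho0 i x)
        (measurable_funS measurableT (@subsetT _ _) (mrho i)) (cc i) (ltW (ci0 i))).
      have hc0 : 0 <= (cc i)%:E by rewrite lee_fin ltW.
      apply: le_trans _ (lee_wpmul2l hc0 h2).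
      rewrite -EFinM lee_fin /cc.
      have : ((2%:R:R) <= (i.+2)%:R)%R by rewrite ler_nat.
      lra.
  - have hB : forall i y, Defs.Im gam y -> (2^-1 < f i y)%R.
      move=> i y Iy; rewrite ltNge; apply/negP => hle; apply: nA; by exists i, y; split.
    have [mI0 mIoo] : 0 < mu (Defs.Im gam) /\ mu (Defs.Im gam) < +oo.
      apply: hsg => //; rewrite /subpath; split => //; split; [exact: pg.1|split => //].
    have fin : mu (Defs.Im gam) \is a fin_num by rewrite ge0_fin_numE // ltW.
    pose r := fine (mu (Defs.Im gam)).
    have rE : r%:E = mu (Defs.Im gam) by rewrite fineK.
    have r0 : (0 < r)%R by rewrite -lte_fin rE.
    pose j := Num.truncn (2 / r).
    have hi : (2 / r < (j.+1)%:R)%R by exact: truncnS_gt.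
    have h2 : (2 < (j.+1)%:R * r)%R by rewrite -ltr_pdivrMr.
    have h3 : ((j.+1)%:R * r <= cc j * r)%R by rewrite ler_wpM2r ?ltW // /cc ?ltr_nat ?ler_nat.
    apply: le_trans _ (lG _ (mc j) (c0 j) (lecG j)).
    apply: (@le_trans _ _ (\int[mu]_(x in Defs.Im gam) (cst ((cc j * 2^-1)%:E) x))).
      rewrite integral_cst // -rE -EFinM lee_fin mulrAC.
      lra.
    apply: (ge0_le_integral mu mI).
    - by move=> x _; rewrite /= lee_fin mulr_ge0 // ltW.
    - exact: measurable_cst.
    - exact: (measurable_funS measurableT (@subsetT _ _) (mc j)).
    - move=> y Iy; rewrite /c /= -EFinM lee_fin ler_wpM2l ?ltW //.
      by have := hB j y Iy; have := ler_norm (f j y); lra.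
apply: (@le_trans _ _ (\int[m]_x poweR (G x) p)).
  by apply: ereal_inf_lbound; exists G.
under eq_integral => x _ do rewrite root_pow //.
rewrite /S (integral_nneseries m measurableT (fun n => mu_ n) (fun n x _ => u0 n x)).
have e30 : (0 <= 3 * eps)%R by rewrite mulr_ge0 // ltW.
apply: le_trans _ (epsilon_trick0 xpredT e30).
apply: lee_nneseries => [i _ _|i _]; first by apply: integral_ge0 => x _; exact: u0.
have [_ [_ [hC [_ [_ [hA [_ [_ hB]]]]]]]] := hg i.
rewrite /u (int3 m (fun x => poweR (a i x) p) (fun x => poweR (b i x) p) (fun x => poweR (c i x) p)).
- apply: le_trans (leeD (leeD hA hB) hC) _; rewrite -!EFinD lee_fin /ee.
  by rewrite -!mulrDl; have -> : (eps + eps + eps = 3 * eps)%R by lra.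
- exact: measurableT_comp (measurable_poweR _) (ma i).
- exact: measurableT_comp (measurable_poweR _) (mk i).
- exact: measurableT_comp (measurable_poweR _) (mc i).
- by move=> x; exact: poweR_ge0.
- by move=> x; exact: poweR_ge0.
- by move=> x; exact: poweR_ge0.
Qed.

End main.

Theorem lemma4p2 (R : realType) (d : measure_display) (T : measurableType d)
  (dist : T -> T -> R) (mu m : {measure set T -> \bar R}) (p : R)
  (Gstar : set (mpath R T)) (F : set T) :
  is_metric dist ->
  borel_for dist ->
  (forall x : T, mu [set x] = 0%E) ->
  0 < p ->
  Gstar `<=` Gamma_mu dist mu ->
  (forall g h, Gstar g -> subpath h g -> nontrivial h -> Gstar h) ->
  (forall x y : T, x <> y -> exists2 g, Gstar g &
     (pf g (pa g) = x /\ pf g (pb g) = y) \/ (pf g (pa g) = y /\ pf g (pb g) = x)) ->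
  ereal_inf [set N1p_norm mu m p Gstar f |
               f in [set f | Ntilde mu m p Gstar f /\ forall x, F x -> 1 <= f x]]
    = 0%E ->
  Mod_p mu m p (Gamma_F Gstar F) = 0%E.
Proof.
move=> hm hb _ p0 hGs hsub _ hinf.
apply/eqP; rewrite eq_le; apply/andP; split.
- apply/lee_addgt0Pr => e e0; rewrite add0e.
  have e30 : 0 < e / 3 by rewrite divr_gt0.
  have := @key _ _ _ dist mu m p Gstar F hm hb p0 hGs hsub hinf _ e30.
  by rewrite mulrC divfK.
- apply: le_ereal_inf_tmp => _ [g [mg [g0 _]] <-].
  by apply: integral_ge0 => x _; exact: poweR_ge0.
Qed.
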